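(* A homeomorphism $f$ of a compact metric space $X$ has the two-sided limit shadowing property if and only if both $f$ and $f^{-1}$ have the limit shadowing property and $W^u(x)\cap W^s(y)\ne\emptyset$ for all $x,y\in X$.
   Context: $W^s(x)=\{y: d(f^n(x),f^n(y))\to0\ (n\to+\infty)\}$, $W^u(x)=\{y: d(f^{-n}(x),f^{-n}(y))\to0\ (n\to+\infty)\}$. A homeomorphism $g$ has the limit shadowing property if for every $(x_k)_{k\in\mathbb{N}}$ with $d(g(x_k),x_{k+1})\to0$ as $k\to\infty$ there is $y$ with $d(g^k(y),x_k)\to0$ as $k\to\infty$. $f$ has the two-sided limit shadowing property if for every $(x_k)_{k\in\mathbb{Z}}$ with $d(f(x_k),x_{k+1})\to0$ as $|k|\to\infty$ there is $y$ with $d(f^k(y),x_k)\to0$ as $|k|\to\infty$. *)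

(* Defs.v *)
From Stdlib Require Import Reals ZArith.
Open Scope R_scope.

Record is_metric {X : Type} (d : X -> X -> R) : Prop := {
  dist_nonneg : forall x y, 0 <= d x y;
  dist_eq0 : forall x y, d x y = 0 <-> x = y;
  dist_sym : forall x y, d x y = d y x;
  dist_tri : forall x y z, d x z <= d x y + d y z
}.

Definition is_open {X : Type} (d : X -> X -> R) (U : X -> Prop) : Prop :=
  forall x, U x -> exists r, 0 < r /\ forall y, d x y < r -> U y.

Definition compact_space {X : Type} (d : X -> X -> R) : Prop :=
  forall (I : Type) (U : I -> X -> Prop),
    (forall i, is_open d (U i)) -> (forall x, exists i, U i x) ->
    exists l : list I, forall x, exists i, List.In i l /\ U i x.

Definition continuous_map {X : Type} (d : X -> X -> R) (f : X -> X) : Prop :=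
  forall x eps, 0 < eps -> exists delta, 0 < delta /\
    forall y, d x y < delta -> d (f x) (f y) < eps.

Definition homeomorphism {X : Type} (d : X -> X -> R) (f g : X -> X) : Prop :=
  continuous_map d f /\ continuous_map d g /\
  (forall x, g (f x) = x) /\ (forall x, f (g x) = x).

Fixpoint iter {X : Type} (f : X -> X) (n : nat) (x : X) : X :=
  match n with O => x | S n => f (iter f n x) end.

Definition ziter {X : Type} (f g : X -> X) (k : Z) (x : X) : X :=
  match k with
  | Z0 => x
  | Zpos p => iter f (Pos.to_nat p) x
  | Zneg p => iter g (Pos.to_nat p) x
  end.

Definition tends0_nat (u : nat -> R) : Prop :=
  forall eps, 0 < eps -> exists N, forall k, (N <= k)%nat -> Rabs (u k) < eps.

Definition tends0_absZ (u : Z -> R) : Prop :=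
  forall eps, 0 < eps -> exists N, forall k, (N <= Z.abs k)%Z -> Rabs (u k) < eps.

Definition stable_set {X : Type} (d : X -> X -> R) (f : X -> X) (x : X) (y : X) : Prop :=
  tends0_nat (fun n => d (iter f n x) (iter f n y)).

(* W^u(x) for f is W^s(x) for f^{-1} = g *)
Definition unstable_set {X : Type} (d : X -> X -> R) (g : X -> X) (x : X) (y : X) : Prop :=
  tends0_nat (fun n => d (iter g n x) (iter g n y)).

Definition limit_shadowing {X : Type} (d : X -> X -> R) (h : X -> X) : Prop :=
  forall xs : nat -> X,
    tends0_nat (fun k => d (h (xs k)) (xs (S k))) ->
    exists y, tends0_nat (fun k => d (iter h k y) (xs k)).

Definition two_sided_limit_shadowing {X : Type} (d : X -> X -> R) (f g : X -> X) : Prop :=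
  forall xs : Z -> X,
    tends0_absZ (fun k => d (f (xs k)) (xs (Z.succ k))) ->
    exists y, tends0_absZ (fun k => d (ziter f g k y) (xs k)).

(* Main.v *)
Require Import Defs.
From Stdlib Require Import Reals ZArith Lra Lia List.
Open Scope R_scope.

Section Aux.
Context {X : Type} (d : X -> X -> R) (Hm : is_metric d).

Lemma d0 x : d x x = 0.
Proof. apply (proj2 (Defs.dist_eq0 _ Hm x x)); reflexivity. Qed.

Lemma unif_cont (Hc : compact_space d) h : continuous_map d h ->
  forall eps, 0 < eps -> exists delta, 0 < delta /\
    forall x y, d x y < delta -> d (h x) (h y) < eps.
Proof.
  intros Hh eps He.
  set (P := fun (p : X * R) => 0 < snd p /\ forall y, d (fst p) y < snd p -> d (h (fst p)) (h y) < eps/2).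
  destruct (Hc {p | P p} (fun i y => d (fst (proj1_sig i)) y < snd (proj1_sig i) / 2)) as [l Hl].
  - intros [[c r] [Hr Hcr]]; intros x Hx; simpl in *. exists (r/2 - d c x). split; [lra|].
    intros y Hy. pose proof (Defs.dist_tri _ Hm c x y). lra.
  - intros x. destruct (Hh x (eps/2)) as [δ [Hδ Hδ']]; [lra|].
    exists (exist P (x,δ) (conj Hδ Hδ')). simpl. rewrite d0. lra.
  - set (m := fold_right (fun (i : {p | P p}) acc => Rmin (snd (proj1_sig i) / 2) acc) 1 l).
    assert (Hpos : 0 < m /\ forall i, In i l -> m <= snd (proj1_sig i) / 2).
    { unfold m; clear Hl; induction l as [|a l IH]; simpl.
      - split; [lra| intros _ []].
      - destruct IH as [IH1 IH2]. destruct a as [[c r] [Hr Hcr]]; simpl.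
        split. simpl in Hr. apply Rmin_glb_lt; [lra| exact IH1].
        intros i [<-|Hi]; simpl. apply Rmin_l.
        eapply Rle_trans; [apply Rmin_r| auto]. }
    destruct Hpos as [Hp1 Hp2].
    exists m. split; auto. intros x y Hxy.
    destruct (Hl x) as [i [Hin Hix]]. specialize (Hp2 i Hin).
    destruct i as [[c r] [Hr Hcr]]; simpl in *.
    pose proof (Defs.dist_tri _ Hm c x y).
    pose proof (Defs.dist_tri _ Hm (h x) (h c) (h y)).
    rewrite (Defs.dist_sym _ Hm (h x) (h c)) in H0.
    assert (d (h c) (h x) < eps/2) by (apply Hcr; lra).
    assert (d (h c) (h y) < eps/2) by (apply Hcr; lra).
    lra.
Qed.

Lemma uc_tends h a b :
  (forall eps, 0 < eps -> exists delta, 0 < delta /\ forall x y, d x y < delta -> d (h x) (h y) < eps) ->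
  tends0_nat (fun n => d (a n) (b n)) -> tends0_nat (fun n => d (h (a n)) (h (b n))).
Proof.
  intros U H eps He. destruct (U eps He) as [δ [Hδ HU]]. destruct (H δ Hδ) as [N HN].
  exists N. intros k Hk. specialize (HN k Hk).
  rewrite Rabs_pos_eq in HN by (apply Defs.dist_nonneg; auto).
  rewrite Rabs_pos_eq by (apply Defs.dist_nonneg; auto). auto.
Qed.

Lemma tends0_le (u v w : nat -> R) : (forall n, 0 <= w n <= u n + v n) ->
  tends0_nat u -> tends0_nat v -> tends0_nat w.
Proof.
  intros Hw Hu Hv eps He.
  destruct (Hu (eps/2)) as [N1 H1]; [lra|]. destruct (Hv (eps/2)) as [N2 H2]; [lra|].
  exists (N1 + N2)%nat. intros k Hk.
  specialize (H1 k ltac:(lia)). specialize (H2 k ltac:(lia)). specialize (Hw k).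
  pose proof (Rle_abs (u k)). pose proof (Rle_abs (v k)).
  rewrite Rabs_pos_eq by lra. lra.
Qed.

Lemma dist_le3 x y z : 0 <= d x z <= d x y + d y z.
Proof. split. apply Defs.dist_nonneg; auto. apply Defs.dist_tri; auto. Qed.

End Aux.

Lemma tends0_ext (u v : nat -> R) : (forall n, u n = v n) -> tends0_nat u -> tends0_nat v.
Proof. intros E H eps He. destruct (H eps He) as [N HN]. exists N. intros k Hk. rewrite <- E. auto. Qed.

Lemma tends0_zero (v : nat -> R) : (forall n, v n = 0) -> tends0_nat v.
Proof. intros E eps He. exists O. intros k _. rewrite E, Rabs_R0. auto. Qed.

Lemma tends0_S_inv (u : nat -> R) : tends0_nat (fun n => u (S n)) -> tends0_nat u.
Proof. intros H eps He. destruct (H eps He) as [N HN]. exists (S N). intros k Hk.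
  destruct k; [lia|]. apply HN; lia. Qed.

Lemma tends0_S (u : nat -> R) : tends0_nat u -> tends0_nat (fun n => u (S n)).
Proof. intros H eps He. destruct (H eps He) as [N HN]. exists N. intros k Hk. apply HN; lia. Qed.

Lemma absZ_split (u : Z -> R) : tends0_absZ u <->
  tends0_nat (fun n => u (Z.of_nat n)) /\ tends0_nat (fun n => u (- Z.of_nat n)%Z).
Proof.
  split.
  - intros H; split; intros eps He; destruct (H eps He) as [N HN];
      exists (Z.to_nat N); intros k Hk; apply HN; lia.
  - intros [H1 H2] eps He. destruct (H1 eps He) as [N1 HN1]. destruct (H2 eps He) as [N2 HN2].
    exists (Z.of_nat (N1 + N2)). intros k Hk. destruct (Z_le_gt_dec 0 k).
    + replace k with (Z.of_nat (Z.to_nat k)) by lia. apply HN1; lia.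
    + replace k with (- Z.of_nat (Z.to_nat (-k)))%Z by lia. apply HN2; lia.
Qed.

Lemma ziter_pos {X} (f g : X -> X) n x : ziter f g (Z.of_nat n) x = Defs.iter f n x.
Proof. destruct n; [reflexivity|]. simpl. rewrite SuccNat2Pos.id_succ. reflexivity. Qed.

Lemma ziter_neg {X} (f g : X -> X) n x : ziter f g (- Z.of_nat n)%Z x = Defs.iter g n x.
Proof. destruct n; [reflexivity|]. simpl. rewrite SuccNat2Pos.id_succ. reflexivity. Qed.

Definition glue {X} (a b : nat -> X) (k : Z) : X :=
  if Z.leb 0 k then a (Z.to_nat k) else b (Z.to_nat (- k)).

Lemma glue_pos {X} (a b : nat -> X) n : glue a b (Z.of_nat n) = a n.
Proof. unfold glue. rewrite (proj2 (Z.leb_le _ _)) by lia. rewrite Nat2Z.id. reflexivity. Qed.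

Lemma glue_neg {X} (a b : nat -> X) n : glue a b (- Z.of_nat (S n))%Z = b (S n).
Proof. unfold glue. rewrite (proj2 (Z.leb_gt _ _)) by lia. f_equal. lia. Qed.

Lemma glue_neg' {X} (a b : nat -> X) n : a O = b O -> glue a b (- Z.of_nat n)%Z = b n.
Proof. intros E. destruct n. simpl. unfold glue. simpl. exact E. apply glue_neg. Qed.

Lemma zsucc_neg n : Z.succ (- Z.of_nat (S n)) = (- Z.of_nat n)%Z.
Proof. lia. Qed.

Theorem mainTheorem9 (X : Type) (d : X -> X -> R) (f g : X -> X)
  (Hmet : is_metric d) (Hcpt : compact_space d) (Hhom : homeomorphism d f g) :
  two_sided_limit_shadowing d f g <->
  (limit_shadowing d f /\ limit_shadowing d g /\
   forall x y : X, exists z : X, unstable_set d g x z /\ stable_set d f y z).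
Proof.
  destruct Hhom as [Hf [Hg [Hgf Hfg]]].
  pose proof (unif_cont d Hmet Hcpt f Hf) as Uf.
  pose proof (unif_cont d Hmet Hcpt g Hg) as Ug.
  assert (Hfi : forall n x, f (Defs.iter g (S n) x) = Defs.iter g n x) by (intros; simpl; apply Hfg).
  split.
  - intros H2. split; [|split].
    + intros xs Hxs.
      set (zs := glue xs (fun n => Defs.iter g n (xs O))).
      destruct (H2 zs) as [y Hy].
      { apply absZ_split; split.
        - eapply tends0_ext; [|exact Hxs]. intros n; cbv beta. unfold zs.
          rewrite <- Nat2Z.inj_succ, !glue_pos. reflexivity.
        - apply tends0_S_inv. apply tends0_zero. intros n. rewrite zsucc_neg.
          unfold zs. rewrite glue_neg, glue_neg' by reflexivity. rewrite Hfi. apply d0; auto. }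
      exists y. destruct (proj1 (absZ_split _) Hy) as [Hp _].
      eapply tends0_ext; [|exact Hp]. intros n; cbv beta. rewrite ziter_pos. unfold zs.
      rewrite glue_pos. reflexivity.
    + intros xs Hxs.
      set (zs := glue (fun n => Defs.iter f n (xs O)) xs).
      destruct (H2 zs) as [y Hy].
      { apply absZ_split; split.
        - apply tends0_zero. intros n. unfold zs.
          rewrite <- Nat2Z.inj_succ, !glue_pos. apply d0; auto.
        - apply tends0_S_inv.
          pose proof (uc_tends d Hmet f (fun n => g (xs n)) (fun n => xs (S n)) Uf Hxs) as H.
          eapply tends0_ext; [|exact H]. intros n; cbv beta. rewrite zsucc_neg. unfold zs.
          rewrite glue_neg, glue_neg' by reflexivity. rewrite Hfg. apply Defs.dist_sym; auto. }
      exists y. destruct (proj1 (absZ_split _) Hy) as [_ Hp].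
      eapply tends0_ext; [|exact Hp]. intros n; cbv beta. rewrite ziter_neg. unfold zs.
      rewrite glue_neg' by reflexivity. reflexivity.
    + intros x y.
      set (zs := glue (fun n => Defs.iter f n y) (fun n => Defs.iter g n x)).
      destruct (H2 zs) as [z Hz].
      { apply absZ_split; split.
        - apply tends0_zero. intros n. unfold zs.
          rewrite <- Nat2Z.inj_succ, !glue_pos. apply d0; auto.
        - apply tends0_S_inv, tends0_S_inv. apply tends0_zero. intros n. rewrite zsucc_neg.
          unfold zs. rewrite !glue_neg. rewrite Hfi. apply d0; auto. }
      exists z. destruct (proj1 (absZ_split _) Hz) as [Hp Hn]. split.
      * apply tends0_S_inv. apply tends0_S in Hn.
        eapply tends0_ext; [|exact Hn]. intros n; cbv beta. rewrite ziter_neg. unfold zs.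
        rewrite glue_neg. apply Defs.dist_sym; auto.
      * eapply tends0_ext; [|exact Hp]. intros n; cbv beta. rewrite ziter_pos. unfold zs.
        rewrite glue_pos. apply Defs.dist_sym; auto.
  - intros [LSf [LSg W]] xs Hxs.
    destruct (proj1 (absZ_split _) Hxs) as [Hp Hn].
    destruct (LSf (fun n => xs (Z.of_nat n))) as [p Hp'].
    { eapply tends0_ext; [|exact Hp]. intros n; cbv beta. rewrite Nat2Z.inj_succ. reflexivity. }
    destruct (LSg (fun n => xs (- Z.of_nat n)%Z)) as [q Hq'].
    { apply tends0_S in Hn.
      pose proof (uc_tends d Hmet g _ _ Ug Hn) as H.
      eapply tends0_ext; [|exact H]. intros n; cbv beta. rewrite zsucc_neg, Hgf.
      apply Defs.dist_sym; auto. }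
    destruct (W q p) as [z [Hzq Hzp]].
    exists z. apply absZ_split; split.
    + eapply tends0_le; [| exact Hzp | exact Hp'].
      intros n. cbv beta. rewrite ziter_pos. rewrite (Defs.dist_sym _ Hmet (Defs.iter f n p)).
      apply dist_le3; auto.
    + eapply tends0_le; [| exact Hzq | exact Hq'].
      intros n. cbv beta. rewrite ziter_neg. rewrite (Defs.dist_sym _ Hmet (Defs.iter g n q)).
      apply dist_le3; auto.
Qed.
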